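(* Let $X$ be a well-ordered set, $S\subseteq GDNP(X)$, and suppose the GDN-Poisson algebra $GDNP(X|S)=GDNP(X)/Id(S)$ satisfies the identity $x\circ(y\cdot z)=(x\circ y)\cdot z+(x\circ z)\cdot y$. Let $\theta:DGDNP(X)\to k\{X\}$ be the GDN-Poisson algebra homomorphism induced by $\theta(a)=a$, $a\in X$ (with $S$ mapped to $DGDNP(X)$ via the canonical projection). Then $GDNP(X|S)$ is isomorphic to $k\{X|\theta(S)\}$ both as GDN-Poisson algebras (with $f\circ g=fDg$ on $k\{X|\theta(S)\}$) and as commutative associative differential algebras (with derivation $f\mapsto e\circ f$ on $GDNP(X|S)$).
   Context: A GDN-Poisson algebra is a vector space with bilinear products $\cdot,\circ$ such that $(\cdot)$ is commutative associative with unit $e$, $x\circ(y\circ z)-(x\circ y)\circ z=y\circ(x\circ z)-(y\circ x)\circ z$, $(x\circ y)\circ z=(x\circ z)\circ y$, $(x\cdot y)\circ z=x\cdot(y\circ z)$, $(x\circ y)\cdot z-x\circ(y\cdot z)=(y\circ x)\cdot z-y\circ(x\cdot z)$. $GDNP(X)$ is the free GDN-Poisson algebra on $X$ and $Id(S)$ its ideal generated by $S$. $DGDNP(X)=GDNP(X)/Id(\lozenge)$ is the free GDN-Poisson algebra satisfying $x\circ(y\cdot z)=(x\circ y)\cdot z+(x\circ z)\cdot y$. $k\{X\}$ is the free commutative associative differential algebra over the field $k$ on $X$, with unit $e$ and one derivation $D$ ($De=0$); for $R\subseteq k\{X\}$, $k\{X|R\}$ is the quotient of $k\{X\}$ by the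 differential ideal generated by $R$. *)

(* Defs.v *)
From HB Require Import structures.
From mathcomp Require Import all_boot all_order all_algebra.
Set Implicit Arguments. Unset Strict Implicit. Unset Printing Implicit Defensive.
Import GRing.Theory.
Local Open Scope ring_scope.

Definition is_well_order (X : Type) (lt : X -> X -> Prop) : Prop :=
  (forall x, ~ lt x x) /\
  (forall x y z, lt x y -> lt y z -> lt x z) /\
  (forall x y, lt x y \/ x = y \/ lt y x) /\
  well_founded lt.

Record GDNPAlg (k : fieldType) := {
  gcar :> lmodType k;
  gmul : gcar -> gcar -> gcar;
  gone : gcar;
  gcirc : gcar -> gcar -> gcar;
  gmul_linl : forall (a : k) x y z, gmul (a *: x + y) z = a *: gmul x z + gmul y z;
  gmul_linr : forall (a : k) x y z, gmul z (a *: x + y) = a *: gmul z x + gmul z y;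
  gmulC : forall x y, gmul x y = gmul y x;
  gmulA : forall x y z, gmul x (gmul y z) = gmul (gmul x y) z;
  gmul1 : forall x, gmul gone x = x;
  gcirc_linl : forall (a : k) x y z, gcirc (a *: x + y) z = a *: gcirc x z + gcirc y z;
  gcirc_linr : forall (a : k) x y z, gcirc z (a *: x + y) = a *: gcirc z x + gcirc z y;
  gcirc_lsym : forall x y z,
    gcirc x (gcirc y z) - gcirc (gcirc x y) z = gcirc y (gcirc x z) - gcirc (gcirc y x) z;
  gcirc_rcomm : forall x y z, gcirc (gcirc x y) z = gcirc (gcirc x z) y;
  gcompat1 : forall x y z, gcirc (gmul x y) z = gmul x (gcirc y z);
  gcompat2 : forall x y z,
    gmul (gcirc x y) z - gcirc x (gmul y z) = gmul (gcirc y x) z - gcirc y (gmul x z)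
}.

Definition GDNP_hom (k : fieldType) (A B : GDNPAlg k) (f : A -> B) : Prop :=
  (forall (a : k) x y, f (a *: x + y) = a *: f x + f y) /\
  (forall x y, f (gmul x y) = gmul (f x) (f y)) /\
  f (gone A) = gone B /\
  (forall x y, f (gcirc x y) = gcirc (f x) (f y)).

Definition GDNP_ideal (k : fieldType) (A : GDNPAlg k) (I : A -> Prop) : Prop :=
  I 0 /\
  (forall (a : k) x y, I x -> I y -> I (a *: x + y)) /\
  (forall x y, I y -> I (gmul x y)) /\
  (forall x y, I y -> I (gcirc x y)) /\
  (forall x y, I x -> I (gcirc x y)).

Definition GDNP_Id (k : fieldType) (A : GDNPAlg k) (S : A -> Prop) (x : A) : Prop :=
  forall I : A -> Prop, GDNP_ideal I -> (forall s, S s -> I s) -> I x.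

(* (Q, pi) is (a model of) the quotient A / Id(S): a surjective homomorphism
   whose kernel is exactly Id(S). *)
Definition is_GDNP_quotient (k : fieldType) (A : GDNPAlg k) (S : A -> Prop)
    (Q : GDNPAlg k) (pi : A -> Q) : Prop :=
  GDNP_hom pi /\ (forall q, exists x, pi x = q) /\
  (forall x, pi x = 0 <-> GDNP_Id S x).

Definition is_free_GDNP (k : fieldType) (X : Type) (F : GDNPAlg k) (iota : X -> F) : Prop :=
  forall (B : GDNPAlg k) (f : X -> B),
    exists phi : F -> B, GDNP_hom phi /\ (forall a, phi (iota a) = f a) /\
      (forall psi : F -> B, GDNP_hom psi -> (forall a, psi (iota a) = f a) ->
         forall x, psi x = phi x).

Definition lozenge (k : fieldType) (A : GDNPAlg k) (w : A) : Prop :=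
  exists x y z, w = gcirc x (gmul y z) - gmul (gcirc x y) z - gmul (gcirc x z) y.

Record DiffAlg (k : fieldType) := {
  dcar :> lmodType k;
  dmul : dcar -> dcar -> dcar;
  done : dcar;
  dD : dcar -> dcar;
  dmul_linl : forall (a : k) x y z, dmul (a *: x + y) z = a *: dmul x z + dmul y z;
  dmul_linr : forall (a : k) x y z, dmul z (a *: x + y) = a *: dmul z x + dmul z y;
  dmulC : forall x y, dmul x y = dmul y x;
  dmulA : forall x y z, dmul x (dmul y z) = dmul (dmul x y) z;
  dmul1 : forall x, dmul done x = x;
  dD_lin : forall (a : k) x y, dD (a *: x + y) = a *: dD x + dD y;
  dD_leibniz : forall x y, dD (dmul x y) = dmul (dD x) y + dmul x (dD y)
}.

Definition Diff_hom (k : fieldType) (A B : DiffAlg k) (f : A -> B) : Prop :=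
  (forall (a : k) x y, f (a *: x + y) = a *: f x + f y) /\
  (forall x y, f (dmul x y) = dmul (f x) (f y)) /\
  f (done A) = done B /\
  (forall x, f (dD x) = dD (f x)).

Definition Diff_ideal (k : fieldType) (A : DiffAlg k) (I : A -> Prop) : Prop :=
  I 0 /\
  (forall (a : k) x y, I x -> I y -> I (a *: x + y)) /\
  (forall x y, I y -> I (dmul x y)) /\
  (forall x, I x -> I (dD x)).

Definition Diff_Id (k : fieldType) (A : DiffAlg k) (R : A -> Prop) (x : A) : Prop :=
  forall I : A -> Prop, Diff_ideal I -> (forall r, R r -> I r) -> I x.

(* (L, rho) is (a model of) k{X|R} = A / (differential ideal generated by R) *)
Definition is_Diff_quotient (k : fieldType) (A : DiffAlg k) (R : A -> Prop)
    (L : DiffAlg k) (rho : A -> L) : Prop :=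
  Diff_hom rho /\ (forall q, exists x, rho x = q) /\
  (forall x, rho x = 0 <-> Diff_Id R x).

Definition is_free_Diff (k : fieldType) (X : Type) (K : DiffAlg k) (iota : X -> K) : Prop :=
  forall (B : DiffAlg k) (f : X -> B),
    exists phi : K -> B, Diff_hom phi /\ (forall a, phi (iota a) = f a) /\
      (forall psi : K -> B, Diff_hom psi -> (forall a, psi (iota a) = f a) ->
         forall x, psi x = phi x).

Definition GDNP_to_Diff_hom (k : fieldType) (A : GDNPAlg k) (K : DiffAlg k) (f : A -> K) : Prop :=
  (forall (a : k) x y, f (a *: x + y) = a *: f x + f y) /\
  (forall x y, f (gmul x y) = dmul (f x) (f y)) /\
  f (gone A) = done K /\
  (forall x y, f (gcirc x y) = dmul (f x) (dD (f y))).

Definition GDNP_Diff_iso (k : fieldType) (Q : GDNPAlg k) (L : DiffAlg k) (phi : Q -> L) : Prop :=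
  bijective phi /\
  GDNP_to_Diff_hom phi /\
  (forall x, phi (gcirc (gone Q) x) = dD (phi x)).

(* Main.v *)
Require Import Defs.
From mathcomp Require Import all_boot all_order all_algebra.
From Stdlib Require Import ClassicalEpsilon.
Import GRing.Theory.
Local Open Scope ring_scope.

Section Lin.
Variables (k : fieldType) (U V : lmodType k) (f : U -> V).
Hypothesis hf : forall (a : k) x y, f (a *: x + y) = a *: f x + f y.
Lemma linD x y : f (x + y) = f x + f y.
Proof. by have := hf 1 x y; rewrite !scale1r. Qed.
Lemma lin0 : f 0 = 0.
Proof. have h := linD 0 0; rewrite addr0 in h; apply: (@addrI _ (f 0)); by rewrite addr0 -h. Qed.
Lemma linN x : f (- x) = - f x.
Proof. by have := hf (-1) x 0; rewrite !scaleN1r lin0 !addr0. Qed.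
Lemma linB x y : f (x - y) = f x - f y.
Proof. by rewrite linD linN. Qed.
End Lin.
Arguments linD {k U V f} hf x y.
Arguments lin0 {k U V f} hf.
Arguments linN {k U V f} hf x.
Arguments linB {k U V f} hf x y.

Section KG.
Variables (k : fieldType) (K : DiffAlg k).
Local Notation m := (@dmul k K).
Local Notation D := (@dD k K).
Lemma dmulDr z x y : m z (x + y) = m z x + m z y.
Proof. exact: (@linD k K K (m z) (fun a x y => dmul_linr (d:=K) a x y z)). Qed.
Lemma dmulDl z x y : m (x + y) z = m x z + m y z.
Proof. exact: (@linD k K K (m^~ z) (fun a x y => dmul_linl (d:=K) a x y z)). Qed.
Lemma dmulBr z x y : m z (x - y) = m z x - m z y.
Proof. exact: (@linB k K K (m z) (fun a x y => dmul_linr (d:=K) a x y z)). Qed.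
Lemma dmul0r z : m 0 z = 0.
Proof. exact: (@lin0 k K K (m^~ z) (fun a x y => dmul_linl (d:=K) a x y z)). Qed.
Lemma dmulr0 z : m z 0 = 0.
Proof. exact: (@lin0 k K K (m z) (fun a x y => dmul_linr (d:=K) a x y z)). Qed.
Lemma dD0 : D 0 = 0.
Proof. exact: (@lin0 k K K D (@dD_lin k K)). Qed.
Lemma dmulCA x y z : m x (m y z) = m y (m x z).
Proof. by rewrite dmulA (dmulC x y) -dmulA. Qed.

Definition kcirc (x y : K) := m x (D y).
Lemma kc_linl a x y z : kcirc (a *: x + y) z = a *: kcirc x z + kcirc y z.
Proof. exact: dmul_linl. Qed.
Lemma kc_linr a x y z : kcirc z (a *: x + y) = a *: kcirc z x + kcirc z y.
Proof. by rewrite /kcirc dD_lin dmul_linr. Qed.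
Lemma kc_lsym x y z : kcirc x (kcirc y z) - kcirc (kcirc x y) z = kcirc y (kcirc x z) - kcirc (kcirc y x) z.
Proof.
rewrite /kcirc !dD_leibniz !dmulDr -!dmulA addrAC subrr add0r addrAC subrr add0r.
exact: dmulCA.
Qed.
Lemma kc_rcomm x y z : kcirc (kcirc x y) z = kcirc (kcirc x z) y.
Proof. by rewrite /kcirc -!dmulA (dmulC (D y)). Qed.
Lemma kc_compat1 x y z : kcirc (m x y) z = m x (kcirc y z).
Proof. by rewrite /kcirc dmulA. Qed.
Lemma kc_compat2 x y z : m (kcirc x y) z - kcirc x (m y z) = m (kcirc y x) z - kcirc y (m x z).
Proof.
rewrite /kcirc !dD_leibniz !dmulDr -!dmulA (dmulC (D y) z) (dmulC (D x) z).
rewrite !opprD !addrA !subrr !add0r; congr (- _).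
exact: dmulCA.
Qed.

Definition KG : GDNPAlg k := Build_GDNPAlg (@dmul_linl k K) (@dmul_linr k K) (@dmulC k K) (@dmulA k K) (@dmul1 k K)
  kc_linl kc_linr kc_lsym kc_rcomm kc_compat1 kc_compat2.
End KG.

Section QD.
Variables (k : fieldType) (Q : GDNPAlg k).
Hypothesis hyp : forall x y z : Q,
     gcirc x (gmul y z) = gmul (gcirc x y) z + gmul (gcirc x z) y.
Definition qD (x : Q) := gcirc (gone Q) x.
Lemma qD_lin a x y : qD (a *: x + y) = a *: qD x + qD y.
Proof. exact: gcirc_linr. Qed.
Lemma qD_leib x y : qD (gmul x y) = gmul (qD x) y + gmul x (qD y).
Proof. by rewrite /qD hyp (gmulC x). Qed.
Definition QD : DiffAlg k := Build_DiffAlg (@gmul_linl k Q) (@gmul_linr k Q) (@gmulC k Q) (@gmulA k Q) (@gmul1 k Q)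
  qD_lin qD_leib.
End QD.

Lemma factor (k : fieldType) (A B C : lmodType k) (pi : A -> B) (f : A -> C)
  (hpi : forall (a : k) x y, pi (a *: x + y) = a *: pi x + pi y)
  (hf : forall (a : k) x y, f (a *: x + y) = a *: f x + f y)
  (surj : forall q, exists x, pi x = q)
  (ker : forall x, pi x = 0 -> f x = 0) :
  exists g : B -> C, forall x, g (pi x) = f x.
Proof.
exists (fun b => f (proj1_sig (constructive_indefinite_description _ (surj b)))).
move=> x; case: constructive_indefinite_description => /= y Hy.
apply/eqP; rewrite -subr_eq0 -(linB hf); apply/eqP; apply: ker.
by rewrite (linB hpi) Hy subrr.
Qed.

Lemma ker_GD (k : fieldType) (A : GDNPAlg k) (K : DiffAlg k) (f : A -> K)
  (hf : GDNP_to_Diff_hom f) (S : A -> Prop) (hS : forall s, S s -> f s = 0) x :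
  GDNP_Id S x -> f x = 0.
Proof.
case: hf => hl [hm [h1 hc]].
move=> H; apply: (H (fun x => f x = 0)) => //.
split; first exact: (lin0 hl).
split; first by move=> a x1 y1 e1 e2; rewrite hl e1 e2 scaler0 addr0.
split; first by move=> x1 y1 e; rewrite hm e dmulr0.
split; first by move=> x1 y1 e; rewrite hc e dD0 dmulr0.
by move=> x1 y1 e; rewrite hc e dmul0r.
Qed.

Lemma ker_D (k : fieldType) (A B : DiffAlg k) (f : A -> B)
  (hf : Diff_hom f) (S : A -> Prop) (hS : forall s, S s -> f s = 0) x :
  Diff_Id S x -> f x = 0.
Proof.
case: hf => hl [hm [h1 hc]].
move=> H; apply: (H (fun x => f x = 0)) => //.
split; first exact: (lin0 hl).
split; first by move=> a x1 y1 e1 e2; rewrite hl e1 e2 scaler0 addr0.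
split; first by move=> x1 y1 e; rewrite hm e dmulr0.
by move=> x1 e; rewrite hc e dD0.
Qed.
Arguments factor {k A B C pi f} hpi hf surj ker.
Arguments ker_GD {k A K f} hf {S} hS {x}.
Arguments ker_D {k A B f} hf {S} hS {x}.

Theorem mainTheorem7
  (k : fieldType) (X : Type) (ltX : X -> X -> Prop) (wo : is_well_order ltX)
  (F : GDNPAlg k) (iota : X -> F) (freeF : is_free_GDNP iota)
  (S : F -> Prop)
  (Q : GDNPAlg k) (piQ : F -> Q) (quotQ : is_GDNP_quotient S piQ)
  (hyp : forall x y z : Q,
     gcirc x (gmul y z) = gmul (gcirc x y) z + gmul (gcirc x z) y)
  (DG : GDNPAlg k) (piD : F -> DG) (quotD : is_GDNP_quotient (@lozenge k F) piD)
  (K : DiffAlg k) (iotaK : X -> K) (freeK : is_free_Diff iotaK) :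
  (exists theta : DG -> K, GDNP_to_Diff_hom theta /\
      forall a, theta (piD (iota a)) = iotaK a) /\
  (forall theta : DG -> K, GDNP_to_Diff_hom theta ->
     (forall a, theta (piD (iota a)) = iotaK a) ->
     forall (L : DiffAlg k) (rho : K -> L),
       is_Diff_quotient (fun r => exists s, S s /\ r = theta (piD s)) rho ->
       exists phi : Q -> L, GDNP_Diff_iso phi).
Proof.
have [[hpiDl [hpiDm [hpiD1 hpiDc]]] [surjD kerD]] := quotD.
have [[hpiQl [hpiQm [hpiQ1 hpiQc]]] [surjQ kerQ]] := quotQ.
split.
  have [phi0 [hphi0 [hphi0i _]]] := freeF (@KG k K) iotaK.
  have h0 : @GDNP_to_Diff_hom k F K phi0 := hphi0.
  have [hl [hm [h1 hc]]] := h0.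
  have ker0 : forall x, piD x = 0 -> phi0 x = 0.
    move=> x /kerD; apply: (ker_GD h0) => s [x1 [y1 [z1 ->]]].
    rewrite !(linB hl) !hc !hm !hc dD_leibniz dmulDr -!dmulA (dmulC (dD (phi0 z1)) (phi0 y1)).
    by rewrite -addrA -opprD subrr.
  have [theta Ht] := factor hpiDl hl surjD ker0.
  exists theta; split; last by move=> a; rewrite Ht hphi0i.
  split.
    move=> a x y; have [x' <-] := surjD x; have [y' <-] := surjD y.
    by rewrite -hpiDl !Ht hl.
  split.
    move=> x y; have [x' <-] := surjD x; have [y' <-] := surjD y.
    by rewrite -hpiDm !Ht hm.
  split; first by rewrite -hpiD1 Ht h1.
  move=> x y; have [x' <-] := surjD x; have [y' <-] := surjD y.
  by rewrite -hpiDc !Ht hc.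
move=> theta [tl [tm [t1 tc]]] ti L rho [[rl [rm [r1 rD]]] [surjL kerL]].
pose h := fun x => rho (theta (piD x)).
have hh : @GDNP_to_Diff_hom k F L h.
  split; first by move=> a x y; rewrite /h hpiDl tl rl.
  split; first by move=> x y; rewrite /h hpiDm tm rm.
  split; first by rewrite /h hpiD1 t1 r1.
  by move=> x y; rewrite /h hpiDc tc rm rD.
have [hl [hm [h1 hc]]] := hh.
have kerh : forall x, piQ x = 0 -> h x = 0.
  move=> x /kerQ; apply: (ker_GD hh) => s Ss; apply/kerL => I _ HI; apply: HI.
  by exists s.
have [phi Hphi] := factor hpiQl hl surjQ kerh.
have phl : forall (a : k) x y, phi (a *: x + y) = a *: phi x + phi y.
  move=> a x y; have [x' <-] := surjQ x; have [y' <-] := surjQ y.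
  by rewrite -hpiQl !Hphi hl.
have phm : forall x y, phi (gmul x y) = dmul (phi x) (phi y).
  move=> x y; have [x' <-] := surjQ x; have [y' <-] := surjQ y.
  by rewrite -hpiQm !Hphi hm.
have ph1 : phi (gone Q) = done L by rewrite -hpiQ1 Hphi h1.
have phc : forall x y, phi (gcirc x y) = dmul (phi x) (dD (phi y)).
  move=> x y; have [x' <-] := surjQ x; have [y' <-] := surjQ y.
  by rewrite -hpiQc !Hphi hc.
have phD : forall x, phi (gcirc (gone Q) x) = dD (phi x).
  by move=> x; rewrite phc ph1 dmul1.
have [psi [hpsi [psii _]]] := freeK (@QD k Q hyp) (fun a => piQ (iota a)).
have [pl [pm [p1 pD]]] := hpsi.
have pm' : forall x y, psi (dmul x y) = gmul (psi x) (psi y) := pm.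
have pD' : forall x, psi (dD x) = gcirc (gone Q) (psi x) := pD.
have p1' : psi (done K) = gone Q := p1.
have pl' : forall (a : k) x y, psi (a *: x + y) = a *: psi x + psi y := pl.
have hcomp : forall x, psi (theta (piD x)) = piQ x.
  have [phi1 [_ [_ U]]] := freeF Q (fun a => piQ (iota a)).
  have hQ : GDNP_hom piQ := quotQ.1.
  have hc1 : @GDNP_hom k F Q (fun x => psi (theta (piD x))).
    split; first by move=> a x1 y1; rewrite hpiDl tl pl'.
    split; first by move=> x1 y1; rewrite hpiDm tm pm'.
    split; first by rewrite hpiD1 t1 p1'.
    by move=> x1 y1; rewrite hpiDc tc pm' pD' -gcompat1 gmulC gmul1.
  move=> x; rewrite (U _ hc1) ?(U _ hQ) //.
  by move=> a; rewrite ti psii.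
have kerpsi : forall y, rho y = 0 -> psi y = 0.
  move=> y /kerL; apply: (ker_D hpsi) => r [s [Ss ->]].
  by rewrite hcomp; apply/kerQ => I _ HI; apply: HI.
have [g Hg] := factor rl pl surjL kerpsi.
have hpr : forall y, phi (psi y) = rho y.
  have [phi2 [_ [_ U]]] := freeK L (fun a => rho (iotaK a)).
  have hR : Diff_hom rho by split.
  have hc2 : @Diff_hom k K L (fun y => phi (psi y)).
    split; first by move=> a x1 y1; rewrite pl' phl.
    split; first by move=> x1 y1; rewrite pm' phm.
    split; first by rewrite p1' ph1.
    by move=> x1; rewrite pD' phD.
  move=> y; rewrite (U _ hc2) ?(U _ hR) //.
  by move=> a; rewrite psii Hphi /h ti.
exists phi; split; last by split.
exists g.
  by move=> q; have [x <-] := surjQ q; rewrite Hphi /h Hg hcomp.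
by move=> l; have [y <-] := surjL l; rewrite Hg hpr.
Qed.
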